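(* Let $\mathcal{C}$ be a $t$-periodic triangulated category over the finite field $k$, with $t>1$ odd, and let $Z\xrightarrow{l}M\xrightarrow{m}L\xrightarrow{n}Z[1]$ be a triangle in $\mathcal{C}$. Put $n\operatorname{Hom}(Z[1],L)=\{b\in\operatorname{End}L\mid b=ns \text{ for some } s\in\operatorname{Hom}(Z[1],L)\}$ and $\operatorname{Hom}(Z[1],L)n=\{d\in\operatorname{End}Z[1]\mid d=sn \text{ for some } s\in\operatorname{Hom}(Z[1],L)\}$. Then \begin{enumerate} \item $|n\operatorname{Hom}(Z[1],L)|=\Big(\prod_{i=1}^t\frac{|\operatorname{Hom}(M[i],L)|^{(-1)^i}}{|\operatorname{Hom}(Z[i],L)|^{(-1)^i}\,|\operatorname{Hom}(L[i],L)|^{(-1)^i}}\Big)^{1/2}$; \item $|\operatorname{Hom}(Z[1],L)n|=\Big(\prod_{i=1}^t\frac{|\operatorname{Hom}(Z[i],M)|^{(-1)^i}}{|\operatorname{Hom}(Z[i],L)|^{(-1)^i}\,|\operatorname{Hom}(Z[i],Z)|^{(-1)^i}}\Big)^{1/2}$. \end{enumerate}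
   Context: $k$ is a finite field with $q$ elements. A $t$-periodic triangulated category is a $k$-additive triangulated category $\mathcal{C}$ with translation functor $T=[1]$ such that (1) $\operatorname{Hom}(X,Y)$ is a finite-dimensional $k$-vector space for all $X,Y$; (2) $\operatorname{End}X$ is a finite-dimensional local $k$-algebra for every indecomposable $X$; (3) $[1]^t=[t]\cong 1_{\mathcal{C}}$. Composition is written left-to-right: for $f:X\to Y$, $g:Y\to Z$, $fg:X\to Z$ denotes ''first $f$, then $g$''. $|S|$ denotes the cardinality of a finite set $S$. *)

(* Defs.v *)
From HB Require Import structures.
From mathcomp Require Import all_boot all_order all_algebra all_field.
Set Implicit Arguments. Unset Strict Implicit. Unset Printing Implicit Defensive.
Import GRing.Theory Num.Theory.
Local Open Scope ring_scope.

(* Composition is written left-to-right: comp f g = "first f, then g". *)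
Record tricat (k : finFieldType) := TriCat {
  Obj : Type;
  Hom : Obj -> Obj -> finLmodType k;
  comp : forall X Y Z : Obj, Hom X Y -> Hom Y Z -> Hom X Z;
  idm : forall X : Obj, Hom X X;
  comp_assoc : forall X Y Z W (f : Hom X Y) (g : Hom Y Z) (h : Hom Z W),
      comp (comp f g) h = comp f (comp g h);
  comp_idl : forall X Y (f : Hom X Y), comp (idm X) f = f;
  comp_idr : forall X Y (f : Hom X Y), comp f (idm Y) = f;
  comp_linl : forall X Y Z (a : k) (f f' : Hom X Y) (g : Hom Y Z),
      comp (a *: f + f') g = a *: comp f g + comp f' g;
  comp_linr : forall X Y Z (a : k) (f : Hom X Y) (g g' : Hom Y Z),
      comp f (a *: g + g') = a *: comp f g + comp f g';
  zobj : Obj;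
  zobj_id : idm zobj = 0;
  biprod : forall X Y : Obj, exists P : Obj, exists (e1 : Hom X P) (e2 : Hom Y P)
      (q1 : Hom P X) (q2 : Hom P Y),
      [/\ comp e1 q1 = idm X, comp e2 q2 = idm Y, comp e1 q2 = 0,
          comp e2 q1 = 0 & comp q1 e1 + comp q2 e2 = idm P];
  sh : Obj -> Obj;
  shm : forall X Y : Obj, Hom X Y -> Hom (sh X) (sh Y);
  shm_lin : forall X Y (a : k) (f g : Hom X Y), shm (a *: f + g) = a *: shm f + shm g;
  shm_id : forall X, shm (idm X) = idm (sh X);
  shm_comp : forall X Y Z (f : Hom X Y) (g : Hom Y Z),
      shm (comp f g) = comp (shm f) (shm g);
  shm_bij : forall X Y : Obj, bijective (@shm X Y);
  sh_esurj : forall Y : Obj, exists X : Obj, exists (a : Hom (sh X) Y) (b : Hom Y (sh X)),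
      comp a b = idm (sh X) /\ comp b a = idm Y;
  dist : forall X Y Z : Obj, Hom X Y -> Hom Y Z -> Hom Z (sh X) -> Prop;
  dist_id : forall X : Obj, dist (idm X) (0 : Hom X zobj) (0 : Hom zobj (sh X));
  dist_ext : forall X Y (f : Hom X Y), exists Z : Obj,
      exists (g : Hom Y Z) (h : Hom Z (sh X)), dist f g h;
  dist_iso : forall X Y Z X' Y' Z' (f : Hom X Y) (g : Hom Y Z) (h : Hom Z (sh X))
      (f' : Hom X' Y') (g' : Hom Y' Z') (h' : Hom Z' (sh X'))
      (a : Hom X X') (a' : Hom X' X) (b : Hom Y Y') (b' : Hom Y' Y)
      (c : Hom Z Z') (c' : Hom Z' Z),
      comp a a' = idm X -> comp a' a = idm X' ->
      comp b b' = idm Y -> comp b' b = idm Y' ->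
      comp c c' = idm Z -> comp c' c = idm Z' ->
      comp f b = comp a f' -> comp g c = comp b g' -> comp h (shm a) = comp c h' ->
      dist f g h -> dist f' g' h';
  dist_rot : forall X Y Z (f : Hom X Y) (g : Hom Y Z) (h : Hom Z (sh X)),
      dist f g h <-> dist g h (- shm f);
  dist_morph : forall X Y Z X' Y' Z' (f : Hom X Y) (g : Hom Y Z) (h : Hom Z (sh X))
      (f' : Hom X' Y') (g' : Hom Y' Z') (h' : Hom Z' (sh X'))
      (a : Hom X X') (b : Hom Y Y'),
      dist f g h -> dist f' g' h' -> comp f b = comp a f' ->
      exists c : Hom Z Z', comp g c = comp b g' /\ comp h (shm a) = comp c h';
  dist_oct : forall X Y Z Z' X' Y' (f : Hom X Y) (g : Hom Y Z)
      (u : Hom Y Z') (u' : Hom Z' (sh X))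
      (v : Hom Z X') (v' : Hom X' (sh Y))
      (w : Hom Z Y') (w' : Hom Y' (sh X)),
      dist f u u' -> dist g v v' -> dist (comp f g) w w' ->
      exists (a : Hom Z' Y') (b : Hom Y' X'),
        [/\ dist a b (comp v' (shm u)), comp u a = comp g w, comp a w' = u',
            comp w b = v & comp b v' = comp w' (shm f)]
}.

Arguments Hom {k} _ _ _.
Arguments comp {k} _ {X Y Z}.
Arguments idm {k} _ X.
Arguments sh {k} _.
Arguments shm {k} _ {X Y}.
Arguments dist {k} _ {X Y Z}.

Section Defs.
Variables (k : finFieldType) (C : tricat k).

Fixpoint shn (n : nat) (X : Obj C) : Obj C :=
  if n is n'.+1 then sh C (shn n' X) else X.

Fixpoint shmn (n : nat) {X Y : Obj C} : Hom C X Y -> Hom C (shn n X) (shn n Y) :=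
  match n with
  | 0 => fun f => f
  | n'.+1 => fun f => shm C (shmn n' f)
  end.

Definition is_iso (X Y : Obj C) (f : Hom C X Y) : Prop :=
  exists g : Hom C Y X, comp C f g = idm C X /\ comp C g f = idm C Y.

Definition indecomposable (X : Obj C) : Prop :=
  idm C X <> 0 /\
  forall (Y1 Y2 P : Obj C) (e1 : Hom C Y1 P) (e2 : Hom C Y2 P)
         (q1 : Hom C P Y1) (q2 : Hom C P Y2) (a : Hom C X P),
    comp C e1 q1 = idm C Y1 -> comp C e2 q2 = idm C Y2 -> comp C e1 q2 = 0 ->
    comp C e2 q1 = 0 -> comp C q1 e1 + comp C q2 e2 = idm C P ->
    is_iso a -> idm C Y1 = 0 \/ idm C Y2 = 0.

Definition local_end (X : Obj C) : Prop :=
  idm C X <> 0 /\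
  forall e : Hom C X X, is_iso e \/ is_iso (idm C X - e).

Definition shift_periodic (t : nat) : Prop :=
  exists eta : forall X : Obj C, Hom C (shn t X) X,
    (forall X, is_iso (eta X)) /\
    (forall (X Y : Obj C) (f : Hom C X Y), comp C (shmn t f) (eta Y) = comp C (eta X) f).

(* t-periodic triangulated category (Hom finiteness is built in) *)
Definition periodic_tricat (t : nat) : Prop :=
  (forall X : Obj C, indecomposable X -> local_end X) /\ shift_periodic t.

End Defs.

Arguments shn {k} C n X.
Arguments shmn {k} C n {X Y}.

(* Main.v *)
Require Import Defs.
From HB Require Import structures.
From mathcomp Require Import all_boot all_order all_algebra all_field.
Import Defs.
Import GRing.Theory Num.Theory.
Local Open Scope ring_scope.
Set Implicit Arguments. Unset Strict Implicit.

Lemma compDr (k : finFieldType) (C : tricat k) (X Y Z : Obj C) (f : Hom C X Y) (g g' : Hom C Y Z) :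
  comp C f (g + g') = comp C f g + comp C f g'.
Proof. by have := comp_linr 1 f g g'; rewrite !scale1r. Qed.
Lemma compDl (k : finFieldType) (C : tricat k) (X Y Z : Obj C) (f f' : Hom C X Y) (g : Hom C Y Z) :
  comp C (f + f') g = comp C f g + comp C f' g.
Proof. by have := comp_linl 1 f f' g; rewrite !scale1r. Qed.
Lemma comp0r (k : finFieldType) (C : tricat k) (X Y Z : Obj C) (f : Hom C X Y) :
  comp C f (0 : Hom C Y Z) = 0.
Proof. by have h := compDr f (0 : Hom C Y Z) 0; rewrite addr0 in h; apply: (addrI (comp C f 0)); rewrite addr0 -h. Qed.
Lemma comp0l (k : finFieldType) (C : tricat k) (X Y Z : Obj C) (g : Hom C Y Z) :
  comp C (0 : Hom C X Y) g = 0.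
Proof. by have h := compDl (0 : Hom C X Y) 0 g; rewrite addr0 in h; apply: (addrI (comp C 0 g)); rewrite addr0 -h. Qed.
Lemma compNr (k : finFieldType) (C : tricat k) (X Y Z : Obj C) (f : Hom C X Y) (g : Hom C Y Z) :
  comp C f (- g) = - comp C f g.
Proof. by apply: (addrI (comp C f g)); rewrite -compDr !subrr comp0r. Qed.
Lemma compNl (k : finFieldType) (C : tricat k) (X Y Z : Obj C) (f : Hom C X Y) (g : Hom C Y Z) :
  comp C (- f) g = - comp C f g.
Proof. by apply: (addrI (comp C f g)); rewrite -compDl !subrr comp0l. Qed.
Lemma compBr (k : finFieldType) (C : tricat k) (X Y Z : Obj C) (f : Hom C X Y) (g g' : Hom C Y Z) :
  comp C f (g - g') = comp C f g - comp C f g'.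
Proof. by rewrite compDr compNr. Qed.
Lemma compBl (k : finFieldType) (C : tricat k) (X Y Z : Obj C) (f f' : Hom C X Y) (g : Hom C Y Z) :
  comp C (f - f') g = comp C f g - comp C f' g.
Proof. by rewrite compDl compNl. Qed.
Lemma shmD (k : finFieldType) (C : tricat k) (X Y : Obj C) (f g : Hom C X Y) :
  shm C (f + g) = shm C f + shm C g.
Proof. by have := shm_lin 1 f g; rewrite !scale1r. Qed.
Lemma shm0 (k : finFieldType) (C : tricat k) (X Y : Obj C) :
  shm C (0 : Hom C X Y) = 0.
Proof. by have h := shmD (0 : Hom C X Y) 0; rewrite addr0 in h; apply: (addrI (shm C (0 : Hom C X Y))); rewrite addr0 -h. Qed.
Lemma shmN (k : finFieldType) (C : tricat k) (X Y : Obj C) (f : Hom C X Y) :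
  shm C (- f) = - shm C f.
Proof. by apply: (addrI (shm C f)); rewrite -shmD !subrr shm0. Qed.
Lemma shm_inj (k : finFieldType) (C : tricat k) (X Y : Obj C) : injective (@shm k C X Y).
Proof. by apply: bij_inj; apply: shm_bij. Qed.
Lemma shm_surj (k : finFieldType) (C : tricat k) (X Y : Obj C) (g : Hom C (sh C X) (sh C Y)) :
  exists f, g = shm C f.
Proof. by case: (shm_bij X Y) => h _ hK; exists (h g); rewrite hK. Qed.

Lemma dist_comp0 (k : finFieldType) (C : tricat k) (X Y Z : Obj C)
  (f : Hom C X Y) (g : Hom C Y Z) (h : Hom C Z (sh C X)) :
  dist C f g h -> comp C f g = 0.
Proof.
move=> hd.
have [c [hc _]] := dist_morph (a := idm C X) (b := f) (dist_id X) hd erefl.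
by rewrite -hc comp0l.
Qed.

Lemma exact_contra (k : finFieldType) (C : tricat k) (X Y Z : Obj C)
  (f : Hom C X Y) (g : Hom C Y Z) (h : Hom C Z (sh C X)) (W : Obj C) (u : Hom C Y W) :
  dist C f g h -> (comp C f u = 0 <-> exists v : Hom C Z W, u = comp C g v).
Proof.
move=> hd; split; last first.
  by case=> v ->; rewrite -comp_assoc (dist_comp0 hd) comp0l.
move=> hu.
have [X0 [a0 [b0 [hab hba]]]] := sh_esurj W.
have d1 := dist_id X0.
move/dist_rot: d1 => d1; move/dist_rot: d1 => d1.
have e : comp C f (comp C u b0) = comp C (0 : Hom C X (zobj C)) (0 : Hom C (zobj C) (sh C X0)).
  by rewrite -comp_assoc hu !comp0l.
have [c [hc _]] := dist_morph hd d1 e.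
exists (comp C (- c) a0).
rewrite -comp_assoc compNr hc shm_id compNr comp_idr opprK comp_assoc hba comp_idr //.
Qed.

Lemma exact_cov (k : finFieldType) (C : tricat k) (X Y Z : Obj C)
  (f : Hom C X Y) (g : Hom C Y Z) (h : Hom C Z (sh C X)) (W : Obj C) (u : Hom C W Y) :
  dist C f g h -> (comp C u g = 0 <-> exists v : Hom C W X, u = comp C v f).
Proof.
move=> hd; split; last first.
  by case=> v ->; rewrite comp_assoc (dist_comp0 hd) comp0r.
move=> hu.
have d1 := dist_id W; move/dist_rot: d1 => d1.
have hd2 := hd; move/dist_rot: hd2 => hd2.
have [c [_ hc]] := dist_morph (a := u) (b := (0 : Hom C (zobj C) Z)) d1 hd2
   (etrans (comp0l _ _) (esym hu)).
have [v hv] := shm_surj c.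
exists v; apply: (@shm_inj _ _ W Y).
move: hc; rewrite hv compNl shm_id comp_idl compNr -shm_comp => /eqP.
by rewrite eqr_opp => /eqP.
Qed.

Lemma dist_shift (k : finFieldType) (C : tricat k) (X Y Z : Obj C)
  (f : Hom C X Y) (g : Hom C Y Z) (h : Hom C Z (sh C X)) :
  dist C f g h -> dist C (shm C f) (shm C g) (- shm C h).
Proof.
move=> hd.
move/dist_rot: hd => hd; move/dist_rot: hd => hd; move/dist_rot: hd => hd.
have hN : forall (A : Obj C), comp C (- idm C A) (- idm C A) = idm C A.
  by move=> A; rewrite compNl compNr opprK comp_idl.
apply: (dist_iso (a := - idm C (sh C X)) (a' := - idm C (sh C X))
                 (b := idm C (sh C Y)) (b' := idm C (sh C Y))
                 (c := - idm C (sh C Z)) (c' := - idm C (sh C Z))) hd => //.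
- by rewrite comp_idl.
- by rewrite comp_idl.
- by rewrite comp_idr compNl comp_idl.
- by rewrite compNr comp_idr opprK comp_idl.
- by rewrite shmN shm_id compNr comp_idr opprK compNl comp_idl opprK.
Qed.

Lemma card_kerim (V W : finZmodType) (phi : V -> W) :
  (forall x y, phi (x - y) = phi x - phi y) ->
  #|V| = (#|[set x | phi x == 0%R]| * #|[set phi x | x : V]|)%N.
Proof.
move=> hB.
have h0 : phi 0 = 0 by rewrite -(subrr (0 : V)) hB subrr.
have hN : forall x, phi (- x) = - phi x by move=> x; rewrite -sub0r hB h0 sub0r.
have hD : forall x y, phi (x + y) = phi x + phi y.
  by move=> x y; have := hB x (- y); rewrite opprK hN opprK.
pose sg := fun y => odflt 0 [pick x | phi x == y].
have hs : forall x, phi (sg (phi x)) = phi x.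
  move=> x; rewrite /sg; case: pickP => [x' /eqP /= -> //|/(_ x)]; by rewrite eqxx.
pose F := fun x => (x - sg (phi x), phi x).
have Finj : injective F.
  move=> x y [e1 e2]; move: e1; rewrite e2; exact: addIr.
rewrite -cardsX -cardsT -(card_imset _ Finj); apply: eq_card => -[a b].
rewrite inE /=; apply/imsetP/andP.
- case=> x _ [-> ->]; split; last by apply/imsetP; exists x.
  by rewrite inE hB hs subrr.
- case; rewrite inE => /eqP ha /imsetP [x _ ->].
  exists (a + sg (phi x)); first by [].
  have e : phi (a + sg (phi x)) = phi x by rewrite hD ha add0r hs.
  by rewrite /F e addrK.
Qed.

Fixpoint nn (k : finFieldType) (C : tricat k) (Z L : Obj C) (n : Hom C L (sh C Z)) (i : nat)
  : Hom C (shn C i L) (shn C i.+1 Z) :=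
  match i return Hom C (shn C i L) (shn C i.+1 Z) with
  | 0 => n
  | i'.+1 => - shm C (nn n i')
  end.

Lemma dist_shn (k : finFieldType) (C : tricat k) (Z M L : Obj C)
  (l : Hom C Z M) (m : Hom C M L) (n : Hom C L (sh C Z)) (i : nat) :
  dist C l m n -> dist C (shmn C i l) (shmn C i m) (nn n i).
Proof. by move=> hd; elim: i => [|i IH] //=; apply: dist_shift. Qed.

Lemma in_imset_comp (k : finFieldType) (C : tricat k) (A B D : Obj C) (x : Hom C A B) (u : Hom C A D) :
  (u \in [set comp C x v | v : Hom C B D]) <-> exists v, u = comp C x v.
Proof. by split; [case/imsetP => v _ ->; exists v | case=> v ->; apply/imsetP; exists v]. Qed.

Lemma in_imset_compl (k : finFieldType) (C : tricat k) (A B D : Obj C) (x : Hom C B D) (u : Hom C A D) :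
  (u \in [set comp C v x | v : Hom C A B]) <-> exists v, u = comp C v x.
Proof. by split; [case/imsetP => v _ ->; exists v | case=> v ->; apply/imsetP; exists v]. Qed.

Lemma fact1 (k : finFieldType) (C : tricat k) (Z M L : Obj C)
  (l : Hom C Z M) (m : Hom C M L) (n : Hom C L (sh C Z)) (j : nat) :
  #|Hom C (shn C j L) L| =
  (#|[set u : Hom C (shn C j L) L | comp C (shmn C j m) u == 0%R]| *
   #|[set comp C (shmn C j m) u | u : Hom C (shn C j L) L]|)%N.
Proof. by apply: card_kerim => x y; rewrite compBr. Qed.

Lemma fact2 (k : finFieldType) (C : tricat k) (Z M L : Obj C)
  (l : Hom C Z M) (m : Hom C M L) (n : Hom C L (sh C Z)) (j : nat) :
  dist C l m n ->
  #|Hom C (shn C j M) L| =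
  (#|[set comp C (shmn C j m) u | u : Hom C (shn C j L) L]| *
   #|[set comp C (shmn C j l) u | u : Hom C (shn C j M) L]|)%N.
Proof.
move=> hd; rewrite (@card_kerim _ _ (fun u => comp C (shmn C j l) u)); last first.
  by move=> x y; rewrite compBr.
congr (_ * _)%N; apply: eq_card => u; rewrite inE.
apply/eqP/idP.
- by move/(exact_contra _ (dist_shn j hd)) => /in_imset_comp.
- by move/in_imset_comp => /(exact_contra _ (dist_shn j hd)).
Qed.

Lemma fact3 (k : finFieldType) (C : tricat k) (Z M L : Obj C)
  (l : Hom C Z M) (m : Hom C M L) (n : Hom C L (sh C Z)) (j : nat) :
  dist C l m n ->
  #|Hom C (shn C j.+1 Z) L| =
  (#|[set comp C (shmn C j.+1 l) u | u : Hom C (shn C j.+1 M) L]| *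
   #|[set u : Hom C (shn C j L) L | comp C (shmn C j m) u == 0%R]|)%N.
Proof.
move=> hd; have d0 := dist_shn j hd.
have d1 := d0; move/dist_rot: d1 => d1.
have d2 := d1; move/dist_rot: d2 => d2.
rewrite (@card_kerim _ _ (fun u => comp C (nn n j) u)); last first.
  by move=> x y; rewrite compBr.
congr (_ * _)%N; apply: eq_card => u; rewrite inE.
- apply/eqP/idP.
  + move/(exact_contra _ d2) => [v ->]; apply/in_imset_comp; exists (- v).
    by rewrite compNl compNr.
  + move/in_imset_comp => [v ->]; apply/(exact_contra _ d2); exists (- v).
    by rewrite compNl compNr opprK.
- apply/idP/eqP.
  + by move/in_imset_comp => /(exact_contra _ d1).
  + by move/(exact_contra _ d1) => /in_imset_comp.
Qed.

Lemma fact1' (k : finFieldType) (C : tricat k) (Z M : Obj C) (l : Hom C Z M) (i : nat) :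
  #|Hom C (shn C i Z) Z| =
  (#|[set u : Hom C (shn C i Z) Z | comp C u l == 0%R]| *
   #|[set comp C u l | u : Hom C (shn C i Z) Z]|)%N.
Proof. by apply: card_kerim => x y; rewrite compBl. Qed.

Lemma fact2' (k : finFieldType) (C : tricat k) (Z M L : Obj C)
  (l : Hom C Z M) (m : Hom C M L) (n : Hom C L (sh C Z)) (i : nat) :
  dist C l m n ->
  #|Hom C (shn C i Z) M| =
  (#|[set comp C u l | u : Hom C (shn C i Z) Z]| *
   #|[set comp C u m | u : Hom C (shn C i Z) M]|)%N.
Proof.
move=> hd; rewrite (@card_kerim _ _ (fun u => comp C u m)); last first.
  by move=> x y; rewrite compBl.
congr (_ * _)%N; apply: eq_card => u; rewrite inE.
apply/eqP/idP.
- by move/(exact_cov _ hd) => /in_imset_compl.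
- by move/in_imset_compl => /(exact_cov _ hd).
Qed.

Lemma fact3' (k : finFieldType) (C : tricat k) (Z M L : Obj C)
  (l : Hom C Z M) (m : Hom C M L) (n : Hom C L (sh C Z)) (i : nat) :
  dist C l m n ->
  #|Hom C (shn C i Z) L| =
  (#|[set comp C u m | u : Hom C (shn C i Z) M]| *
   #|[set comp C u n | u : Hom C (shn C i Z) L]|)%N.
Proof.
move=> hd; have d1 := hd; move/dist_rot: d1 => d1.
rewrite (@card_kerim _ _ (fun u => comp C u n)); last first.
  by move=> x y; rewrite compBl.
congr (_ * _)%N; apply: eq_card => u; rewrite inE.
apply/eqP/idP.
- by move/(exact_cov _ d1) => /in_imset_compl.
- by move/in_imset_compl => /(exact_cov _ d1).
Qed.

Lemma fact4' (k : finFieldType) (C : tricat k) (Z M L : Obj C)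
  (l : Hom C Z M) (m : Hom C M L) (n : Hom C L (sh C Z)) (i : nat) :
  dist C l m n ->
  #|[set u : Hom C (shn C i Z) Z | comp C u l == 0%R]| =
  #|[set comp C u n | u : Hom C (shn C i.+1 Z) L]|.
Proof.
move=> hd; have d2 := hd; move/dist_rot: d2 => d2; move/dist_rot: d2 => d2.
rewrite -(card_imset _ (@shm_inj _ C _ _)); apply: eq_card => w.
apply/imsetP/idP.
- case=> u; rewrite inE => /eqP hu ->; apply/in_imset_compl.
  apply/(exact_cov _ d2); by rewrite compNr -shm_comp hu shm0 oppr0.
- move/in_imset_compl => /(exact_cov _ d2); rewrite compNr => /eqP; rewrite oppr_eq0 => /eqP.
  have [u ->] := shm_surj w; rewrite -shm_comp => h0.
  have hu : comp C u l = 0 by apply: (@shm_inj _ C); rewrite h0 shm0.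
  by exists u; rewrite // inE hu.
Qed.

Lemma perK (k : finFieldType) (C : tricat k) (M L : Obj C) (m : Hom C M L) (t : nat) :
  shift_periodic C t ->
  #|[set u : Hom C (shn C t L) L | comp C (shmn C t m) u == 0%R]| =
  #|[set u : Hom C L L | comp C m u == 0%R]|.
Proof.
case=> eta [hiso hnat].
have [gL [hL1 hL2]] := hiso L; have [gM [hM1 hM2]] := hiso M.
have inj : injective (fun u : Hom C L L => comp C (eta L) u).
  by move=> x y /= e; rewrite -(comp_idl x) -(comp_idl y) -hL2 !comp_assoc e.
rewrite -(card_imset _ inj); apply: eq_card => w; rewrite inE.
apply/eqP/imsetP.
- move=> hw; exists (comp C gL w); last by rewrite -comp_assoc hL1 comp_idl.
  rewrite inE; apply/eqP.
  rewrite -(comp_idl (comp C m _)) -hM2 comp_assoc -(comp_assoc (eta M)) -hnat.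
  by rewrite !comp_assoc -(comp_assoc (eta L)) hL1 comp_idl hw comp0r.
- case=> u; rewrite inE => /eqP hu ->.
  by rewrite -comp_assoc hnat comp_assoc hu comp0r.
Qed.

Lemma perG (k : finFieldType) (C : tricat k) (Z L : Obj C) (n : Hom C L (sh C Z)) (t : nat) :
  shift_periodic C t ->
  #|[set comp C u n | u : Hom C (shn C t.+1 Z) L]| =
  #|[set comp C u n | u : Hom C (sh C Z) L]|.
Proof.
case=> eta [hiso _].
have [g [h1 h2]] := hiso Z.
pose E := shm C (eta Z); pose E' := shm C g.
have e1 : comp C E' E = idm C (sh C Z) by rewrite /E /E' -shm_comp h2 shm_id.
have e2 : comp C E E' = idm C (sh C (shn C t Z)) by rewrite /E /E' -shm_comp h1 shm_id.
have inj : injective (fun u : Hom C (sh C Z) (sh C Z) => comp C E u).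
  by move=> x y /= e; rewrite -(comp_idl x) -(comp_idl y) -e1 !comp_assoc e.
rewrite -(card_imset _ inj); apply: eq_card => w.
apply/idP/imsetP.
- case/in_imset_compl => u ->; exists (comp C (comp C E' u) n).
    by apply/in_imset_compl; exists (comp C E' u).
  by rewrite -!comp_assoc e2 comp_idl.
- case=> v /in_imset_compl [s ->] ->; apply/in_imset_compl.
  by exists (comp C E s); rewrite comp_assoc.
Qed.
Lemma factor_eq (a b c d i : nat) : (0 < a)%N -> (0 < b)%N -> (0 < c)%N -> (0 < d)%N ->
  ((a * b)%N%:R : algC) ^ ((-1) ^+ i : int)
   / (((b * c)%N%:R : algC) ^ ((-1) ^+ i : int) * ((d * a)%N%:R : algC) ^ ((-1) ^+ i : int))
  = if odd i then ((c * d)%N%:R : algC) else ((c * d)%N%:R)^-1.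
Proof.
move=> ha hb hc hd.
have na : (a%:R : algC) != 0 by rewrite pnatr_eq0 -lt0n.
have nb : (b%:R : algC) != 0 by rewrite pnatr_eq0 -lt0n.
have nc : (c%:R : algC) != 0 by rewrite pnatr_eq0 -lt0n.
have nd : (d%:R : algC) != 0 by rewrite pnatr_eq0 -lt0n.
rewrite -signr_odd !natrM; case: (odd i); rewrite ?expr1 ?expr0 ?exprN1 ?expr1z.
- rewrite !invfM !invrK -!mulrA (mulKf nb) [d%:R * _]mulrC mulrCA (mulKf na) //.
- rewrite !invfM -!mulrA (mulVKf nb) [d%:R^-1 * _]mulrC mulrCA (mulVKf na) //.
Qed.

Lemma prod_tele (t : nat) (F : nat -> algC) (g : nat -> nat) : odd t ->
  (forall i, (0 < g i)%N) ->
  (forall j, (j < t)%N -> F j.+1 = if odd j.+1 then ((g j * g j.+1)%N%:R : algC)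
                                   else ((g j * g j.+1)%N%:R)^-1) ->
  \prod_(1 <= i < t.+1) F i = (g 0 * g t)%N%:R.
Proof.
move=> ht hg hF.
have nz : forall i, ((g i)%:R : algC) != 0 by move=> i; rewrite pnatr_eq0 -lt0n.
rewrite -(odd_double_half t) ht /= in hF *.
elim: (t./2) hF => [|j IH] hF.
  by rewrite big_nat1 hF.
rewrite doubleS big_nat_recr // big_nat_recr //= IH; last first.
  by move=> i hi; apply: hF; rewrite doubleS ltnS leqW // ltnW.
rewrite !hF ?doubleS ?ltnS ?leqnn ?leqW //= odd_double /=.
rewrite !natrM !add1n invfM -!mulrA (mulVKf (nz _)) (mulKf (nz _)) //.
Qed.

Lemma imK0 (k : finFieldType) (C : tricat k) (Z M L : Obj C)
  (l : Hom C Z M) (m : Hom C M L) (n : Hom C L (sh C Z)) :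
  dist C l m n ->
  #|[set comp C n s | s : Hom C (sh C Z) L]| = #|[set u : Hom C L L | comp C m u == 0%R]|.
Proof.
move=> hd; have d1 := hd; move/dist_rot: d1 => d1.
apply: eq_card => u; rewrite inE; apply/idP/eqP.
- by move/in_imset_comp => /(exact_contra _ d1).
- by move/(exact_contra _ d1) => /in_imset_comp.
Qed.


Unset Implicit Arguments.
Set Strict Implicit.

Theorem lemma2p2 (k : finFieldType) (C : tricat k) (t : nat)
  (ht1 : (1 < t)%N) (htodd : odd t) (hper : periodic_tricat C t)
  (Z M L : Obj C) (l : Hom C Z M) (m : Hom C M L) (n : Hom C L (sh C Z))
  (htri : dist C l m n) :
  ((#|[set comp C n s | s : Hom C (sh C Z) L]|%:R : algC) =
     sqrtC (\prod_(1 <= i < t.+1)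
       ((#|Hom C (shn C i M) L|%:R : algC) ^ ((-1) ^+ i : int)
        / ((#|Hom C (shn C i Z) L|%:R : algC) ^ ((-1) ^+ i : int)
           * (#|Hom C (shn C i L) L|%:R : algC) ^ ((-1) ^+ i : int)))))
  /\
  ((#|[set comp C s n | s : Hom C (sh C Z) L]|%:R : algC) =
     sqrtC (\prod_(1 <= i < t.+1)
       ((#|Hom C (shn C i Z) M|%:R : algC) ^ ((-1) ^+ i : int)
        / ((#|Hom C (shn C i Z) L|%:R : algC) ^ ((-1) ^+ i : int)
           * (#|Hom C (shn C i Z) Z|%:R : algC) ^ ((-1) ^+ i : int))))).
Proof.
case: hper => _ hper.
split.
- pose K := fun j => #|[set u : Hom C (shn C j L) L | comp C (shmn C j m) u == 0%R]|.
  have Kpos : forall j, (0 < K j)%N.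
    by move=> j; apply/card_gt0P; exists 0; rewrite inE comp0r.
  rewrite (@prod_tele t _ K) //; last first.
    move=> j _.
    rewrite (fact2 j.+1 htri) (fact3 j htri) (fact1 l m n j.+1) factor_eq //.
    + by apply/card_gt0P; exists (comp C (shmn C j.+1 m) 0); apply/imsetP; exists 0.
    + by apply/card_gt0P; exists (comp C (shmn C j.+1 l) 0); apply/imsetP; exists 0.
    + exact: (Kpos j).
    + exact: (Kpos j.+1).
  have -> : K t = K 0 by rewrite /K (perK m hper).
  by rewrite (imK0 htri) natrM -expr2 sqrCK // ler0n.
- pose G := fun j => #|[set comp C u n | u : Hom C (shn C j.+1 Z) L]|.
  have Gpos : forall j, (0 < G j)%N.
    by move=> j; apply/card_gt0P; exists (comp C 0 n); apply/imsetP; exists 0.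
  rewrite (@prod_tele t _ G) //; last first.
    move=> j _.
    rewrite (fact2' j.+1 htri) (fact3' j.+1 htri) (fact1' l j.+1) (fact4' j.+1 htri) factor_eq //.
    + by apply/card_gt0P; exists (comp C 0 l); apply/imsetP; exists 0.
    + by apply/card_gt0P; exists (comp C 0 m); apply/imsetP; exists 0.
    + exact: (Gpos j).
    + exact: (Gpos j.+1).
  have -> : G t = G 0 by rewrite /G (perG n hper).
  by rewrite natrM -expr2 sqrCK // ler0n.
Qed.
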